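(* The function $g$ has a unique fixed point in $[0,\infty)$, namely $g^*=J_\lambda(0,0)$: $g(g^* )=g^*$, and $g(h)\neq h$ for every $h\ge0$ with $h\neq g^*$.
   Context: Fix $p\in(0,1)$, $q\in[0,1]$, $\lambda>0$. $\mathbb{Z}_+=\{0,1,2,\dots\}$. Let $d:[0,\infty)\to\mathbb{R}$ satisfy: (C1) $d(0)>0$; (C2) $d$ is convex and increasing; (C3) for every $\delta>0$, $r\mapsto d(r+\delta)-d(r)$ increases to $\infty$ as $r\to\infty$. Write $d(x,y):=d(\sqrt{x^2+y^2})$ for $(x,y)\in\mathbb{R}^2$, and assume (C4): $d(x,y)$ is positive, twice continuously partially differentiable, with $d_{xx},d_{xy},d_{yy}>0$ for all $x,y\ge0$. Set $\Delta_1(m,n)=d(m+1,n)-d(m,n)$, $\Delta_2(m,n)=d(m,n+1)-d(m,n)$, $\Delta_q(m,n)=q\Delta_1(m,n)+(1-q)\Delta_2(m,n)$ for $(m,n)\in\mathbb{Z}_+^2$. Relay placement MDP: the state space is $\{(m,n,z):(m,n)\in\mathbb{Z}_+^2,\ z\in\{\mathsf e,\mathsf c\}\}\cup\{\phi\}$ ($(m,n)$ is the displacement of the deploying agent from the last placed relay, or from the origin if none; $z=\mathsf e$ means the lattice path has ended, $z=\mathsf c$ that it continues). Actions $u\in\{0,1\}$ ($u=1$: place a relay). From $(m,n,\mathsf c)$ with $u=0$ the next state is $(m+1,n,\mathsf c)$ w.p. $(1-p)q$, $(m+1,n,\mathsf e)$ w.p. $pq$, $(m,n+1,\mathsf c)$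 w.p. $(1-p)(1-q)$, $(m,n+1,\mathsf e)$ w.p. $p(1-q)$; with $u=1$ it is $(1,0,\mathsf c)$, $(1,0,\mathsf e)$, $(0,1,\mathsf c)$, $(0,1,\mathsf e)$ with these same respective probabilities. At $(m,n,\mathsf e)$ only $u=1$ is allowed and the next state is the absorbing cost-free state $\phi$. One-step cost: $d(m,n)$ at $(m,n,\mathsf e)$; $\lambda+d(m,n)$ if $u=1$ at $(m,n,\mathsf c)$; $0$ otherwise. The deployment starts in state $(0,0,\mathsf c)$. $J_\lambda(m,n)$ is the optimal expected total cost (infimum over all, possibly history-dependent and randomized, policies) starting from $(m,n,\mathsf c)$, and $g^*:=J_\lambda(0,0)$. For $h\ge 0$ let $\mathcal{P}(h)=\{(m,n)\in\mathbb{Z}_+^2: p(\lambda+h)\le\Delta_q(m,n)\}$ and $\mathcal{P}^c(h)=\mathbb{Z}_+^2\setminus\mathcal{P}(h)$. Let $g(h)\in[0,\infty]$ be the expected total cost, starting from $(0,0,\mathsf c)$, of the stationary policy that in state $(m,n,\mathsf c)$ places a relay ($u=1$) if and only if $(m,n)\in\mathcal{P}(h)$. *)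

(* Defs.v *)
From Stdlib Require Import Reals List.
Open Scope R_scope.

Definition convex_on_nonneg (d : R -> R) : Prop :=
  forall x y t, 0 <= x -> 0 <= y -> 0 <= t <= 1 ->
    d (t * x + (1 - t) * y) <= t * d x + (1 - t) * d y.

Definition increasing_on_nonneg (d : R -> R) : Prop :=
  forall x y, 0 <= x -> x < y -> d x < d y.

Definition C3 (d : R -> R) : Prop :=
  forall delta, 0 < delta ->
    (forall r1 r2, 0 <= r1 -> r1 <= r2 ->
        d (r1 + delta) - d r1 <= d (r2 + delta) - d r2) /\
    (forall M, exists R0, forall r, R0 <= r -> M < d (r + delta) - d r).

Definition d2 (d : R -> R) (x y : R) : R := d (sqrt (x ^ 2 + y ^ 2)).

Definition cont2_at (F : R -> R -> R) (x y : R) : Prop :=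
  forall eps, 0 < eps -> exists delta, 0 < delta /\
    forall x' y', Rabs (x' - x) < delta -> Rabs (y' - y) < delta ->
      Rabs (F x' y' - F x y) < eps.

Definition C4 (d : R -> R) : Prop :=
  (forall x y, 0 <= x -> 0 <= y -> 0 < d2 d x y) /\
  exists Fx Fy Fxx Fxy Fyx Fyy : R -> R -> R,
    forall x y, 0 < x -> 0 < y ->
      derivable_pt_lim (fun t => d2 d t y) x (Fx x y) /\
      derivable_pt_lim (fun t => d2 d x t) y (Fy x y) /\
      derivable_pt_lim (fun t => Fx t y) x (Fxx x y) /\
      derivable_pt_lim (fun t => Fx x t) y (Fxy x y) /\
      derivable_pt_lim (fun t => Fy t y) x (Fyx x y) /\
      derivable_pt_lim (fun t => Fy x t) y (Fyy x y) /\
      cont2_at Fx x y /\ cont2_at Fy x y /\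
      cont2_at Fxx x y /\ cont2_at Fxy x y /\
      cont2_at Fyx x y /\ cont2_at Fyy x y /\
      0 < Fxx x y /\ 0 < Fxy x y /\ 0 < Fyy x y.

Definition dd (d : R -> R) (m n : nat) : R := d2 d (INR m) (INR n).
Definition Delta1 (d : R -> R) (m n : nat) : R := dd d (S m) n - dd d m n.
Definition Delta2 (d : R -> R) (m n : nat) : R := dd d m (S n) - dd d m n.
Definition Deltaq (d : R -> R) (q : R) (m n : nat) : R :=
  q * Delta1 d m n + (1 - q) * Delta2 d m n.

(* Cont m n = (m,n,c), Ended m n = (m,n,e), Phi = absorbing state *)
Inductive state : Type :=
| Cont (m n : nat)
| Ended (m n : nat)
| Phi.

(* A history: the past (state, action) pairs, most recent first
   (action true = u=1, place a relay). *)
Definition history := list (state * bool).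

(* A general (history-dependent, randomized) policy: given the past history
   and the current state, the probability of choosing u=1. *)
Definition policy := history -> state -> R.

Definition valid_policy (pol : policy) : Prop :=
  forall h s, 0 <= pol h s <= 1.

(* Expected cost of the next N steps under policy pol, given past history
   hist and current state s.  At (m,n,e) only u=1 is allowed (forced). *)
Fixpoint Vfin (d : R -> R) (p q lam : R) (pol : policy) (N : nat)
  (hist : history) (s : state) {struct N} : R :=
  match N with
  | O => 0
  | S N' =>
    let step (h : history) (i j : nat) : R :=
        (1 - p) * q * Vfin d p q lam pol N' h (Cont (S i) j)
      + p * q * Vfin d p q lam pol N' h (Ended (S i) j)
      + (1 - p) * (1 - q) * Vfin d p q lam pol N' h (Cont i (S j))
      + p * (1 - q) * Vfin d p q lam pol N' h (Ended i (S j)) in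
    match s with
    | Phi => 0
    | Ended m n => dd d m n + Vfin d p q lam pol N' ((s, true) :: hist) Phi
    | Cont m n =>
      let a := pol hist s in
      a * (lam + dd d m n + step ((s, true) :: hist) 0%nat 0%nat)
      + (1 - a) * step ((s, false) :: hist) m n
    end
  end.

(* The expected total cost of pol from (m,n,c) is the finite real v:
   the (nondecreasing) N-step expected costs converge to v.  When the
   expected total cost is +oo, no v satisfies this. *)
Definition total_cost_is (d : R -> R) (p q lam : R) (pol : policy)
  (m n : nat) (v : R) : Prop :=
  Un_cv (fun N => Vfin d p q lam pol N nil (Cont m n)) v.

Definition is_J (d : R -> R) (p q lam : R) (m n : nat) (v : R) : Prop :=
  (forall pol, valid_policy pol ->
     forall c, total_cost_is d p q lam pol m n c -> v <= c) /\
  (forall eps, 0 < eps -> exists pol, valid_policy pol /\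
     exists c, total_cost_is d p q lam pol m n c /\ c < v + eps).

(* The stationary threshold policy: place a relay at (m,n,c) iff
   (m,n) in P(h), i.e. p(lambda+h) <= Delta_q(m,n). *)
Definition thr_policy (d : R -> R) (p q lam h : R) : policy :=
  fun _ s => match s with
             | Cont m n => if Rle_dec (p * (lam + h)) (Deltaq d q m n)
                           then 1 else 0
             | _ => 0
             end.

Definition g_is (d : R -> R) (p q lam h v : R) : Prop :=
  total_cost_is d p q lam (thr_policy d p q lam h) 0 0 v.

(* Main.v *)
From Pilot Require Import Defs.
From Stdlib Require Import Reals Lra Lia Psatz ClassicalEpsilon.
Import Pilot.Defs.
Open Scope list_scope.
Open Scope R_scope.

Lemma sqrt_le_of (A B : R) : 0 <= A -> 0 <= B -> A <= B*B -> sqrt A <= B.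
Proof.
  intros HA HB H. destruct (Rle_lt_dec (sqrt A) B) as [h|h]; auto.
  pose proof (sqrt_sqrt A HA). pose proof (sqrt_pos A).
  assert (B * B < sqrt A * sqrt A) by nra. lra.
Qed.

Lemma le_sqrt_of (A B : R) : 0 <= A -> B*B <= A -> B <= sqrt A.
Proof.
  intros HA H. destruct (Rle_lt_dec B (sqrt A)) as [h|h]; auto.
  pose proof (sqrt_sqrt A HA). pose proof (sqrt_pos A).
  assert (sqrt A * sqrt A < B * B) by nra. lra.
Qed.

Definition Sset (q : R) (m n : nat) : Prop := (q = 1 -> n = 0%nat) /\ (q = 0 -> m = 0%nat).

Section Dfacts.
Variable d : R -> R.
Hypothesis Hd0 : 0 < d 0.
Hypothesis Hconv : convex_on_nonneg d.
Hypothesis Hinc : increasing_on_nonneg d.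

Lemma d_mono x y : 0 <= x -> x <= y -> d x <= d y.
Proof. intros Hx Hxy. destruct (Rle_lt_or_eq_dec _ _ Hxy) as [h|h].
  - left; apply Hinc; auto.
  - subst; lra. Qed.

Lemma dd_eq m n : dd d m n = d (sqrt (INR m ^ 2 + INR n ^ 2)).
Proof. reflexivity. Qed.

Lemma d2_mono x y x' y' : 0 <= x -> x <= x' -> 0 <= y -> y <= y' -> d2 d x y <= d2 d x' y'.
Proof.
  intros. unfold d2. apply d_mono. apply sqrt_pos. apply sqrt_le_1_alt. nra.
Qed.

Lemma dd_pos m n : 0 < dd d m n.
Proof.
  unfold dd, d2. eapply Rlt_le_trans. apply Hd0. apply d_mono. lra. apply sqrt_pos.
Qed.

Lemma dd_mono_gen m n m' n' : (m <= m')%nat -> (n <= n')%nat -> dd d m n <= dd d m' n'.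
Proof.
  intros. unfold dd. apply d2_mono; try apply pos_INR; apply le_INR; auto.
Qed.

Lemma dd_mono1 m n : dd d m n <= dd d (S m) n.
Proof. apply dd_mono_gen; lia. Qed.
Lemma dd_mono2 m n : dd d m n <= dd d m (S n).
Proof. apply dd_mono_gen; lia. Qed.

Lemma dd_sym m n : dd d m n = dd d n m.
Proof. unfold dd, d2. now rewrite Rplus_comm. Qed.

Lemma Delta2_sym m n : Delta2 d m n = Delta1 d n m.
Proof. unfold Delta1, Delta2. rewrite (dd_sym m (S n)), (dd_sym m n). reflexivity. Qed.

Lemma Delta1_mono_m m n : Delta1 d m n <= Delta1 d (S m) n.
Proof.
  unfold Delta1. rewrite !dd_eq. rewrite !S_INR.
  set (x := INR m). set (y := INR n).
  assert (Hx : 0 <= x) by apply pos_INR. assert (Hy : 0 <= y) by apply pos_INR.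
  set (a := sqrt (x ^ 2 + y ^ 2)). set (r1 := sqrt ((x + 1) ^ 2 + y ^ 2)).
  set (b := sqrt ((x + 1 + 1) ^ 2 + y ^ 2)).
  assert (Ha : a * a = x ^ 2 + y ^ 2) by (apply sqrt_sqrt; nra).
  assert (Hb : b * b = (x+1+1) ^ 2 + y ^ 2) by (apply sqrt_sqrt; nra).
  assert (Ha0 : 0 <= a) by apply sqrt_pos. assert (Hb0 : 0 <= b) by apply sqrt_pos.
  assert (Hab : x * (x + 2) + y * y <= a * b).
  { assert (H1 : (x * (x + 2) + y * y) * (x * (x + 2) + y * y) <= (a * b) * (a * b)).
    { replace ((a*b)*(a*b)) with ((a*a)*(b*b)) by ring. rewrite Ha, Hb. nra. }
    assert (0 <= a * b) by nra.
    destruct (Rle_lt_dec (x * (x + 2) + y * y) (a * b)); auto. nra. }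
  assert (Hr1 : r1 <= (a + b) / 2).
  { apply sqrt_le_of. nra. lra. nra. }
  assert (Hc : d ((a + b) / 2) <= (d a + d b) / 2).
  { pose proof (Hconv a b (1/2) Ha0 Hb0 ltac:(lra)) as Hc.
    replace (1 / 2 * a + (1 - 1 / 2) * b) with ((a + b) / 2) in Hc by field. lra. }
  assert (d r1 <= d ((a + b) / 2)) by (apply d_mono; [apply sqrt_pos | lra]).
  lra.
Qed.

Lemma Delta1_nonneg m n : 0 <= Delta1 d m n.
Proof. unfold Delta1. pose proof (dd_mono1 m n). lra. Qed.
Lemma Delta2_nonneg m n : 0 <= Delta2 d m n.
Proof. unfold Delta2. pose proof (dd_mono2 m n). lra. Qed.

Lemma Delta2_mono_n m n : Delta2 d m n <= Delta2 d m (S n).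
Proof. rewrite !Delta2_sym. apply Delta1_mono_m. Qed.


Lemma mixed_open (HC4 : C4 d) x0 x1 y0 y1 :
  0 < x0 -> x0 < x1 -> 0 < y0 -> y0 < y1 ->
  d2 d x1 y0 - d2 d x0 y0 < d2 d x1 y1 - d2 d x0 y1.
Proof.
  intros Hx0 Hx Hy0 Hy.
  destruct HC4 as [_ [Fx [Fy [Fxx [Fxy [Fyx [Fyy H]]]]]]].
  assert (Hi : forall x, 0 < x -> Fx x y0 < Fx x y1).
  { intros x Hxp.
    destruct (MVT_cor2 (fun t => Fx x t) (Fxy x) y0 y1 Hy) as [c [Hc1 Hc2]].
    { intros c Hc. apply (H x c Hxp ltac:(lra)). }
    assert (0 < Fxy x c) by (apply (H x c Hxp ltac:(lra))).
    assert (0 < Fxy x c * (y1 - y0)) by (apply Rmult_lt_0_compat; lra). lra. }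
  destruct (MVT_cor2 (fun t => d2 d t y1 - d2 d t y0) (fun t => Fx t y1 - Fx t y0) x0 x1 Hx)
    as [c [Hc1 Hc2]].
  { intros c Hc.
    apply (derivable_pt_lim_minus (fun t => d2 d t y1) (fun t => d2 d t y0));
      apply H; lra. }
  pose proof (Hi c ltac:(lra)).
  assert (0 < (Fx c y1 - Fx c y0) * (x1 - x0)) by (apply Rmult_lt_0_compat; lra).
  lra.
Qed.

Lemma mixed_nonneg (HC4 : C4 d) m n :
  0 <= dd d (S m) (S n) - dd d m (S n) - dd d (S m) n + dd d m n.
Proof.
  unfold dd. rewrite !S_INR.
  set (x := INR m). set (y := INR n).
  assert (Hx : 0 <= x) by apply pos_INR. assert (Hy : 0 <= y) by apply pos_INR.
  set (D := d2 d (x + 1) (y + 1) - d2 d x (y + 1) - d2 d (x + 1) y + d2 d x y).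
  destruct (Rle_lt_dec 0 D) as [h|hD]; auto. exfalso.
  set (r := sqrt (x ^ 2 + y ^ 2)).
  assert (Hr : r * r = x ^ 2 + y ^ 2) by (apply sqrt_sqrt; nra).
  assert (Hr0 : 0 <= r) by apply sqrt_pos.
  set (K := d (r + 1) - d r).
  assert (HK : 0 <= K) by (unfold K; pose proof (d_mono r (r+1) Hr0 ltac:(lra)); lra).
  set (e := Rmin (1/4) ((- D) / (2 * (K + 1)))).
  assert (He0 : 0 < e).
  { unfold e. apply Rmin_pos. lra. apply Rdiv_lt_0_compat; lra. }
  assert (He1 : e <= 1/4) by apply Rmin_l.
  assert (He2 : 2 * e * K <= - D).
  { assert (e <= (- D) / (2 * (K + 1))) by apply Rmin_r.
    assert (e * (2 * (K + 1)) <= - D).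
    { apply (Rmult_le_compat_r (2 * (K+1))) in H; [|lra].
      unfold Rdiv in H. rewrite Rmult_assoc, Rinv_l in H; lra. }
    nra. }
  pose proof (mixed_open HC4 (x + e) (x + 1) (y + e) (y + 1)
     ltac:(lra) ltac:(lra) ltac:(lra) ltac:(lra)) as Hm.
  assert (H1 : d2 d x (y + 1) <= d2 d (x + e) (y + 1)) by (apply d2_mono; lra).
  assert (H2 : d2 d (x + 1) y <= d2 d (x + 1) (y + e)) by (apply d2_mono; lra).
  assert (H3 : d2 d (x + e) (y + e) <= d2 d x y + 2 * e * K).
  { unfold d2. fold r.
    assert (Hs : sqrt ((x + e) ^ 2 + (y + e) ^ 2) <= r + 2 * e).
    { apply sqrt_le_of. nra. lra.
      assert (x <= r) by (destruct (Rle_lt_dec x r); auto; nra).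
      assert (y <= r) by (destruct (Rle_lt_dec y r); auto; nra). nra. }
    assert (d (sqrt ((x + e) ^ 2 + (y + e) ^ 2)) <= d (r + 2 * e))
      by (apply d_mono; [apply sqrt_pos | lra]).
    pose proof (Hconv (r + 1) r (2 * e) ltac:(lra) Hr0 ltac:(lra)) as Hc.
    replace (2 * e * (r + 1) + (1 - 2 * e) * r) with (r + 2 * e) in Hc by ring.
    unfold K. lra. }
  assert (HDd : D = d2 d (x + 1) (y + 1) - d2 d x (y + 1) - d2 d (x + 1) y + d2 d x y) by reflexivity. lra.
Qed.

Lemma Deltaq_mono (HC4 : C4 d) q (Hq : 0 <= q <= 1) m n :
  Deltaq d q m n <= Deltaq d q (S m) n /\ Deltaq d q m n <= Deltaq d q m (S n).
Proof.
  pose proof (mixed_nonneg HC4 m n) as Hm.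
  pose proof (Delta1_mono_m m n). pose proof (Delta2_mono_n m n).
  unfold Deltaq. split.
  - assert (Delta2 d m n <= Delta2 d (S m) n) by (unfold Delta2; lra).
    assert (q * Delta1 d m n <= q * Delta1 d (S m) n) by (apply Rmult_le_compat_l; lra).
    assert ((1 - q) * Delta2 d m n <= (1-q) * Delta2 d (S m) n) by (apply Rmult_le_compat_l; lra).
    lra.
  - assert (Delta1 d m n <= Delta1 d m (S n)) by (unfold Delta1; lra).
    assert (q * Delta1 d m n <= q * Delta1 d m (S n)) by (apply Rmult_le_compat_l; lra).
    assert ((1 - q) * Delta2 d m n <= (1-q) * Delta2 d m (S n)) by (apply Rmult_le_compat_l; lra).
    lra.
Qed.

Lemma Delta1_big (HC3 : C3 d) M : exists R0, forall m n, (n <= m)%nat -> R0 <= INR m -> M < Delta1 d m n.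
Proof.
  destruct (HC3 (1/2) ltac:(lra)) as [_ H]. destruct (H M) as [R0 HR0].
  exists R0. intros m n Hnm Hm.
  unfold Delta1. rewrite !dd_eq, S_INR.
  set (x := INR m). set (y := INR n).
  assert (Hx : 0 <= x) by apply pos_INR. assert (Hy : 0 <= y) by apply pos_INR.
  assert (Hyx : y <= x) by (apply le_INR; auto).
  set (r := sqrt (x ^ 2 + y ^ 2)).
  assert (Hr : r * r = x ^ 2 + y ^ 2) by (apply sqrt_sqrt; nra).
  assert (Hr0 : 0 <= r) by apply sqrt_pos.
  assert (Hxr : x <= r) by (destruct (Rle_lt_dec x r); auto; nra).
  assert (Hr2 : r <= 2 * x) by (apply sqrt_le_of; nra).
  assert (Hs : r + 1/2 <= sqrt ((x + 1) ^ 2 + y ^ 2)) by (apply le_sqrt_of; nra).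
  assert (d (r + 1/2) <= d (sqrt ((x + 1) ^ 2 + y ^ 2))) by (apply d_mono; lra).
  pose proof (HR0 r ltac:(unfold x in *; lra)). lra.
Qed.

Lemma finite_Pc (HC3 : C3 d) q (Hq : 0 <= q <= 1) T :
  exists K, (1 <= K)%nat /\ forall m n, Sset q m n -> (K <= m + n)%nat -> T <= Deltaq d q m n.
Proof.
  destruct (Delta1_big HC3 ((Rabs T + 1) / q)) as [R1 HR1].
  destruct (Delta1_big HC3 ((Rabs T + 1) / (1 - q))) as [R2 HR2].
  destruct (INR_unbounded (2 * (Rabs R1 + Rabs R2) + 1)) as [K0 HK0].
  exists (S K0). split; [lia|]. intros m n [Hs1 Hs2] HK.
  assert (Hmn : INR (S K0) <= INR m + INR n) by (rewrite <- plus_INR; apply le_INR; auto).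
  rewrite S_INR in Hmn.
  pose proof (Rle_abs R1). pose proof (Rle_abs R2).
  pose proof (Rabs_pos R1). pose proof (Rabs_pos R2). pose proof (Rle_abs T).
  pose proof (Delta1_nonneg m n). pose proof (Delta2_nonneg m n).
  unfold Deltaq.
  destruct (Compare_dec.le_dec n m) as [Hnm|Hnm].
  - assert (INR n <= INR m) by (apply le_INR; auto).
    destruct (Req_dec q 0) as [q0|q0].
    { specialize (Hs2 q0). subst m. assert (n = 0%nat) by lia. subst n. simpl in Hmn.
      pose proof (pos_INR K0). lra. }
    pose proof (HR1 m n Hnm ltac:(lra)) as Hb.
    assert (Hq' : 0 < q) by lra.
    assert (q * ((Rabs T + 1) / q) = Rabs T + 1) by (field; lra).
    assert (q * ((Rabs T + 1) / q) < q * Delta1 d m n) by (apply Rmult_lt_compat_l; lra).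
    assert (0 <= (1 - q) * Delta2 d m n) by (apply Rmult_le_pos; lra).
    lra.
  - assert (Hmn' : (m <= n)%nat) by lia.
    assert (INR m <= INR n) by (apply le_INR; auto).
    destruct (Req_dec q 1) as [q1|q1].
    { specialize (Hs1 q1). subst n. lia. }
    pose proof (HR2 n m Hmn' ltac:(lra)) as Hb. rewrite <- Delta2_sym in Hb.
    assert (Hq' : 0 < 1 - q) by lra.
    assert ((1 - q) * ((Rabs T + 1) / (1 - q)) = Rabs T + 1) by (field; lra).
    assert ((1 - q) * ((Rabs T + 1) / (1 - q)) < (1 - q) * Delta2 d m n) by (apply Rmult_lt_compat_l; lra).
    assert (0 <= q * Delta1 d m n) by (apply Rmult_le_pos; lra).
    lra.
Qed.

End Dfacts.

Section MDP.
Variables (d : R -> R) (p q lam : R).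
Hypothesis Hp : 0 < p < 1.
Hypothesis Hq : 0 <= q <= 1.
Hypothesis Hlam : 0 < lam.
Hypothesis Hddpos : forall m n, 0 < dd d m n.
Hypothesis Hddgen : forall m n m' n', (m <= m')%nat -> (n <= n')%nat -> dd d m n <= dd d m' n'.
Hypothesis Hclos : forall m n, Deltaq d q m n <= Deltaq d q (S m) n /\ Deltaq d q m n <= Deltaq d q m (S n).
Hypothesis HKex : forall T, exists K, (1 <= K)%nat /\
  forall m n, Sset q m n -> (K <= m + n)%nat -> T <= Deltaq d q m n.

Lemma Hdd1 m n : dd d m n <= dd d (S m) n.
Proof. apply Hddgen; lia. Qed.
Lemma Hdd2 m n : dd d m n <= dd d m (S n).
Proof. apply Hddgen; lia. Qed.

Lemma Sset_r m n : Sset q m n -> q <> 0 -> Sset q (S m) n.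
Proof. intros [H1 H2] H. split; auto. intro; contradiction. Qed.
Lemma Sset_u m n : Sset q m n -> q <> 1 -> Sset q m (S n).
Proof. intros [H1 H2] H. split; auto. intro; contradiction. Qed.
Lemma Sset_00 : Sset q 0 0.
Proof. split; auto. Qed.

Definition comb (A B C D : R) := (1-p)*q*A + p*q*B + (1-p)*(1-q)*C + p*(1-q)*D.

Lemma comb_le A1 B1 C1 D1 A2 B2 C2 D2 :
  (q = 0 \/ (A1 <= A2 /\ B1 <= B2)) -> (q = 1 \/ (C1 <= C2 /\ D1 <= D2)) ->
  comb A1 B1 C1 D1 <= comb A2 B2 C2 D2.
Proof.
  unfold comb. intros H1 H2.
  assert (E1 : (1-p)*q*A1 + p*q*B1 <= (1-p)*q*A2 + p*q*B2).
  { destruct H1 as [H1|[Ha Hb]]. rewrite H1. lra.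
    assert ((1-p)*q*A1 <= (1-p)*q*A2) by (apply Rmult_le_compat_l; nra).
    assert (p*q*B1 <= p*q*B2) by (apply Rmult_le_compat_l; nra). lra. }
  assert (E2 : (1-p)*(1-q)*C1 + p*(1-q)*D1 <= (1-p)*(1-q)*C2 + p*(1-q)*D2).
  { destruct H2 as [H2|[Ha Hb]]. rewrite H2. lra.
    assert ((1-p)*(1-q)*C1 <= (1-p)*(1-q)*C2) by (apply Rmult_le_compat_l; nra).
    assert (p*(1-q)*D1 <= p*(1-q)*D2) by (apply Rmult_le_compat_l; nra). lra. }
  lra.
Qed.

Lemma comb_eq A1 B1 C1 D1 A2 B2 C2 D2 :
  (q = 0 \/ (A1 = A2 /\ B1 = B2)) -> (q = 1 \/ (C1 = C2 /\ D1 = D2)) ->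
  comb A1 B1 C1 D1 = comb A2 B2 C2 D2.
Proof.
  intros H1 H2. apply Rle_antisym; apply comb_le;
  (destruct H1 as [H1|[Ha Hb]]; [left; auto| right; lra]) ||
  (destruct H2 as [H2|[Ha Hb]]; [left; auto| right; lra]).
Qed.

Lemma comb_const T : comb T T T T = T.
Proof. unfold comb. ring. Qed.

Definition stp (Z : nat -> nat -> R) (m n : nat) : R :=
  comb (Z (S m) n) (dd d (S m) n) (Z m (S n)) (dd d m (S n)).

Lemma stp_stop G m n :
  stp (fun i j => lam + dd d i j + G) m n = (1-p)*(lam+G) + dd d m n + Deltaq d q m n.
Proof. unfold stp, comb, Deltaq, Delta1, Delta2. ring. Qed.

Fixpoint Xk (h G : R) (k : nat) (m n : nat) {struct k} : R :=
  match k with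
  | O => lam + dd d m n + G
  | S k' => if Rle_dec (p*(lam+h)) (Deltaq d q m n) then lam + dd d m n + G
            else comb (Xk h G k' (S m) n) (dd d (S m) n) (Xk h G k' m (S n)) (dd d m (S n))
  end.

Lemma Xk_S h G k m n : Xk h G (S k) m n =
  if Rle_dec (p*(lam+h)) (Deltaq d q m n) then lam + dd d m n + G else stp (Xk h G k) m n.
Proof. reflexivity. Qed.

Fixpoint Bk (h : R) (k : nat) (m n : nat) {struct k} : R :=
  match k with
  | O => 1
  | S k' => if Rle_dec (p*(lam+h)) (Deltaq d q m n) then 1
            else (1-p)*q*Bk h k' (S m) n + (1-p)*(1-q)*Bk h k' m (S n)
  end.

Definition Kprop h K := (1 <= K)%nat /\
  forall m n, Sset q m n -> (K <= m + n)%nat -> p*(lam+h) <= Deltaq d q m n.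
Definition Kf h : nat := epsilon (inhabits 0%nat) (Kprop h).
Lemma Kf_spec h : Kprop h (Kf h).
Proof. unfold Kf. apply epsilon_spec. apply HKex. Qed.

Definition Xf h G m n := Xk h G (Kf h) m n.

Lemma FI h G : forall k m n, Sset q m n -> (Kf h <= k + m + n)%nat ->
  Xk h G k m n = Xk h G (S k) m n.
Proof.
  destruct (Kf_spec h) as [HK1 HK2].
  induction k; intros m n Hs Hk.
  - rewrite Xk_S. destruct Rle_dec as [P|nP]; [reflexivity|].
    exfalso. apply nP. apply HK2; auto; lia.
  - rewrite (Xk_S h G k), (Xk_S h G (S k)). destruct Rle_dec; [reflexivity|].
    unfold stp. apply comb_eq.
    + destruct (Req_dec q 0) as [q0|q0]; [left; auto|right; split; auto].
      apply IHk. apply Sset_r; auto. lia.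
    + destruct (Req_dec q 1) as [q1|q1]; [left; auto|right; split; auto].
      apply IHk. apply Sset_u; auto. lia.
Qed.

Lemma Xf_eq h G m n : Sset q m n -> Xf h G m n =
  if Rle_dec (p*(lam+h)) (Deltaq d q m n) then lam + dd d m n + G else stp (Xf h G) m n.
Proof.
  intro Hs. unfold Xf. rewrite FI by (auto; lia). rewrite Xk_S. reflexivity.
Qed.

Lemma Xf_P h G m n : Sset q m n -> p*(lam+h) <= Deltaq d q m n -> Xf h G m n = lam + dd d m n + G.
Proof. intros Hs HP. rewrite Xf_eq by auto. destruct Rle_dec; [reflexivity|contradiction]. Qed.

Lemma Xf_nP h G m n : Sset q m n -> ~ p*(lam+h) <= Deltaq d q m n -> Xf h G m n = stp (Xf h G) m n.
Proof. intros Hs HP. rewrite Xf_eq by auto. destruct Rle_dec; [contradiction|reflexivity]. Qed.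

Lemma stp_P h G m n : Sset q m n -> p*(lam+h) <= Deltaq d q m n ->
  stp (Xf h G) m n = (1-p)*(lam+G) + dd d m n + Deltaq d q m n.
Proof.
  intros Hs HP. rewrite <- stp_stop. unfold stp. apply comb_eq.
  - destruct (Req_dec q 0) as [q0|q0]; [left; auto|right; split; auto].
    apply Xf_P. apply Sset_r; auto. pose proof (Hclos m n); lra.
  - destruct (Req_dec q 1) as [q1|q1]; [left; auto|right; split; auto].
    apply Xf_P. apply Sset_u; auto. pose proof (Hclos m n); lra.
Qed.

Lemma Xk_le_stop h : forall k m n, Sset q m n -> Xk h h k m n <= lam + dd d m n + h.
Proof.
  induction k; intros m n Hs.
  - simpl; lra.
  - rewrite Xk_S. destruct Rle_dec as [P|nP]; [lra|].
    apply Rle_trans with (stp (fun i j => lam + dd d i j + h) m n).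
    + unfold stp. apply comb_le.
      * destruct (Req_dec q 0) as [q0|q0]; [left; auto|right; split; [|lra]].
        apply IHk. apply Sset_r; auto.
      * destruct (Req_dec q 1) as [q1|q1]; [left; auto|right; split; [|lra]].
        apply IHk. apply Sset_u; auto.
    + rewrite stp_stop. lra.
Qed.

Lemma Xf_le_stop h m n : Sset q m n -> Xf h h m n <= lam + dd d m n + h.
Proof. apply Xk_le_stop. Qed.

Lemma Xf_le_stp h m n : Sset q m n -> Xf h h m n <= stp (Xf h h) m n.
Proof.
  intro Hs. destruct (Rle_dec (p*(lam+h)) (Deltaq d q m n)) as [P|nP].
  - rewrite Xf_P by auto. rewrite stp_P by auto. lra.
  - rewrite Xf_nP at 1 by auto. lra.
Qed.

Lemma opt_cmp (Z : nat -> nat -> R) G h' :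
  (forall m n, Sset q m n -> Z m n <= lam + dd d m n + G /\ Z m n <= stp Z m n) ->
  forall k m n, Sset q m n -> Z m n <= Xk h' G k m n.
Proof.
  intros HZ. induction k; intros m n Hs.
  - simpl. apply HZ; auto.
  - rewrite Xk_S. destruct Rle_dec. apply HZ; auto.
    apply Rle_trans with (stp Z m n). apply HZ; auto.
    unfold stp. apply comb_le.
    + destruct (Req_dec q 0) as [q0|q0]; [left; auto|right; split; [|lra]].
      apply IHk. apply Sset_r; auto.
    + destruct (Req_dec q 1) as [q1|q1]; [left; auto|right; split; [|lra]].
      apply IHk. apply Sset_u; auto.
Qed.

Lemma Xk_aff h G : forall k m n, Xk h G k m n = Xk h 0 k m n + G * Bk h k m n.
Proof.
  induction k; intros m n; simpl. ring.
  destruct Rle_dec. ring. unfold comb. rewrite (IHk (S m) n), (IHk m (S n)). ring.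
Qed.

Lemma Bk_bnd h : forall k m n, 0 <= Bk h k m n <= 1.
Proof.
  induction k; intros m n; simpl. lra.
  destruct Rle_dec. lra.
  pose proof (IHk (S m) n). pose proof (IHk m (S n)).
  assert (0 <= (1-p)*q) by nra. assert (0 <= (1-p)*(1-q)) by nra.
  split; nra.
Qed.

Lemma Xk_nonneg h G : 0 <= G -> forall k m n, 0 <= Xk h G k m n.
Proof.
  intros HG. induction k; intros m n; simpl.
  pose proof (Hddpos m n); lra.
  destruct Rle_dec. pose proof (Hddpos m n); lra.
  unfold comb.
  pose proof (IHk (S m) n). pose proof (IHk m (S n)).
  pose proof (Hddpos (S m) n). pose proof (Hddpos m (S n)).
  assert (0 <= (1-p)*q) by nra. assert (0 <= (1-p)*(1-q)) by nra.
  assert (0 <= p*q) by nra. assert (0 <= p*(1-q)) by nra.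
  assert (0 <= (1-p)*q*Xk h G k (S m) n) by (apply Rmult_le_pos; lra).
  assert (0 <= p*q*dd d (S m) n) by (apply Rmult_le_pos; lra).
  assert (0 <= (1-p)*(1-q)*Xk h G k m (S n)) by (apply Rmult_le_pos; lra).
  assert (0 <= p*(1-q)*dd d m (S n)) by (apply Rmult_le_pos; lra).
  lra.
Qed.

Definition Y h G := stp (Xf h G) 0 0.
Definition bY h := (1-p)*q*Bk h (Kf h) 1 0 + (1-p)*(1-q)*Bk h (Kf h) 0 1.
Definition Sfun h := Y h h.

Lemma Y_aff h G : Y h G = Y h 0 + G * bY h.
Proof. unfold Y, stp, comb, Xf, bY. rewrite (Xk_aff h G _ 1 0), (Xk_aff h G _ 0 1). ring. Qed.

Lemma bY_bnd h : 0 <= bY h <= 1 - p.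
Proof.
  unfold bY. pose proof (Bk_bnd h (Kf h) 1 0). pose proof (Bk_bnd h (Kf h) 0 1).
  assert (0 <= (1-p)*q) by nra. assert (0 <= (1-p)*(1-q)) by nra.
  split; nra.
Qed.

Lemma Y0_nonneg h : 0 <= Y h 0.
Proof.
  unfold Y, stp, comb, Xf.
  pose proof (Xk_nonneg h 0 (Rle_refl 0) (Kf h) 1 0).
  pose proof (Xk_nonneg h 0 (Rle_refl 0) (Kf h) 0 1).
  pose proof (Hddpos 1 0). pose proof (Hddpos 0 1).
  assert (0 <= (1-p)*q) by nra. assert (0 <= (1-p)*(1-q)) by nra.
  assert (0 <= p*q) by nra. assert (0 <= p*(1-q)) by nra.
  assert (0 <= (1-p)*q*Xk h 0 (Kf h) 1 0) by (apply Rmult_le_pos; lra).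
  assert (0 <= p*q*dd d 1 0) by (apply Rmult_le_pos; lra).
  assert (0 <= (1-p)*(1-q)*Xk h 0 (Kf h) 0 1) by (apply Rmult_le_pos; lra).
  assert (0 <= p*(1-q)*dd d 0 1) by (apply Rmult_le_pos; lra).
  lra.
Qed.

Lemma Y_opt h h' : Y h h <= Y h' h.
Proof.
  unfold Y, stp. apply comb_le.
  - destruct (Req_dec q 0) as [q0|q0]; [left; auto|right; split; [|lra]].
    apply opt_cmp. intros; split; [apply Xf_le_stop|apply Xf_le_stp]; auto.
    apply Sset_r; auto. apply Sset_00.
  - destruct (Req_dec q 1) as [q1|q1]; [left; auto|right; split; [|lra]].
    apply opt_cmp. intros; split; [apply Xf_le_stop|apply Xf_le_stp]; auto.
    apply Sset_u; auto. apply Sset_00.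
Qed.

Lemma S_lip h1 h2 : h1 <= h2 -> Sfun h1 <= Sfun h2 <= Sfun h1 + (1-p)*(h2-h1).
Proof.
  intros H. unfold Sfun.
  pose proof (Y_opt h2 h1) as A1. pose proof (Y_opt h1 h2) as A2.
  rewrite (Y_aff h1 h2) in A1. rewrite (Y_aff h2 h1) in A2.
  pose proof (Y_aff h1 h1) as E1. pose proof (Y_aff h2 h2) as E2.
  pose proof (bY_bnd h1). pose proof (bY_bnd h2).
  assert ((h2 - h1) * bY h1 <= (h2-h1)*(1-p)) by (apply Rmult_le_compat_l; lra).
  assert (0 <= (h2 - h1) * bY h2) by (apply Rmult_le_pos; lra).
  split; lra.
Qed.

Lemma fp_exists : exists hs, 0 <= hs /\ Sfun hs = hs.
Proof.
  set (f := fun h => Sfun h - h).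
  assert (Hc : continuity f).
  { intros x. unfold continuity_pt, continue_in, limit1_in, limit_in.
    intros eps Heps. exists (eps/2). split; [lra|].
    intros y [_ Hy]. simpl in *. unfold R_dist in *. unfold f.
    destruct (Rle_dec x y) as [Hxy|Hxy].
    - pose proof (S_lip x y Hxy).
      rewrite Rabs_right in Hy by lra.
      apply Rabs_def1; nra.
    - assert (y <= x) by lra. pose proof (S_lip y x H).
      rewrite Rabs_left in Hy by lra.
      apply Rabs_def1; nra. }
  pose proof (Y0_nonneg 0) as H0. fold (Sfun 0) in H0.
  assert (HU : 0 <= Sfun 0 / p) by (unfold Rdiv; apply Rmult_le_pos; [lra|left; apply Rinv_0_lt_compat; lra]).
  destruct (IVT_cor f 0 (Sfun 0 / p) Hc HU) as [z [Hz1 Hz2]].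
  { unfold f. pose proof (S_lip 0 (Sfun 0 / p) HU).
    assert (p * (Sfun 0 / p) = Sfun 0) by (field; lra).
    assert (Sfun (Sfun 0 / p) - Sfun 0 / p <= 0) by nra.
    assert (0 <= Sfun 0 - 0) by lra. nra. }
  exists z. unfold f in Hz2. split; lra.
Qed.

Lemma fp_unique h1 h2 : Sfun h1 = h1 -> Sfun h2 = h2 -> h1 = h2.
Proof.
  intros H1 H2. destruct (Rtotal_order h1 h2) as [H|[H|H]]; auto.
  - pose proof (S_lip h1 h2 ltac:(lra)). nra.
  - pose proof (S_lip h2 h1 ltac:(lra)). nra.
Qed.


Fixpoint EN (pol : policy) (N : nat) (F : history -> state -> R) (hist : history) (s : state) {struct N} : R :=
  match N with
  | O => F hist s
  | S N' =>
    let step (h : history) (i j : nat) : R :=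
        (1 - p) * q * EN pol N' F h (Cont (S i) j)
      + p * q * EN pol N' F h (Ended (S i) j)
      + (1 - p) * (1 - q) * EN pol N' F h (Cont i (S j))
      + p * (1 - q) * EN pol N' F h (Ended i (S j)) in
    match s with
    | Phi => 0
    | Ended m n => EN pol N' F ((s, true) :: hist) Phi
    | Cont m n =>
      let a := pol hist s in
      a * step ((s, true) :: hist) 0%nat 0%nat + (1 - a) * step ((s, false) :: hist) m n
    end
  end.

Definition stepE pol N F h i j :=
  comb (EN pol N F h (Cont (S i) j)) (EN pol N F h (Ended (S i) j))
       (EN pol N F h (Cont i (S j))) (EN pol N F h (Ended i (S j))).
Definition stepV pol N h i j :=
  comb (Vfin d p q lam pol N h (Cont (S i) j)) (Vfin d p q lam pol N h (Ended (S i) j))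
       (Vfin d p q lam pol N h (Cont i (S j))) (Vfin d p q lam pol N h (Ended i (S j))).

Lemma EN_S_Cont pol N F hist m n : EN pol (S N) F hist (Cont m n) =
  pol hist (Cont m n) * stepE pol N F ((Cont m n, true) :: hist) 0 0
  + (1 - pol hist (Cont m n)) * stepE pol N F ((Cont m n, false) :: hist) m n.
Proof. reflexivity. Qed.
Lemma EN_S_Ended pol N F hist m n : EN pol (S N) F hist (Ended m n) =
  EN pol N F ((Ended m n, true) :: hist) Phi.
Proof. reflexivity. Qed.
Lemma EN_S_Phi pol N F hist : EN pol (S N) F hist Phi = 0.
Proof. reflexivity. Qed.
Lemma V_S_Cont pol N hist m n : Vfin d p q lam pol (S N) hist (Cont m n) =
  pol hist (Cont m n) * (lam + dd d m n + stepV pol N ((Cont m n, true) :: hist) 0 0)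
  + (1 - pol hist (Cont m n)) * stepV pol N ((Cont m n, false) :: hist) m n.
Proof. reflexivity. Qed.
Lemma V_S_Ended pol N hist m n : Vfin d p q lam pol (S N) hist (Ended m n) =
  dd d m n + Vfin d p q lam pol N ((Ended m n, true) :: hist) Phi.
Proof. reflexivity. Qed.
Lemma V_S_Phi pol N hist : Vfin d p q lam pol (S N) hist Phi = 0.
Proof. reflexivity. Qed.
Lemma V_0 pol hist s : Vfin d p q lam pol 0 hist s = 0.
Proof. reflexivity. Qed.
Lemma V_Phi pol N hist : Vfin d p q lam pol N hist Phi = 0.
Proof. destruct N; reflexivity. Qed.

Lemma tower pol M : forall N hist s,
  Vfin d p q lam pol (N + M) hist s = Vfin d p q lam pol N hist s
    + EN pol N (fun h s => Vfin d p q lam pol M h s) hist s.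
Proof.
  induction N; intros hist s.
  - simpl. ring.
  - change (S N + M)%nat with (S (N + M)). destruct s.
    + rewrite !V_S_Cont, EN_S_Cont. unfold stepV, stepE, comb. rewrite !IHN. ring.
    + rewrite !V_S_Ended, EN_S_Ended. rewrite IHN. ring.
    + rewrite !V_S_Phi, EN_S_Phi. ring.
Qed.

Lemma EN_lin pol a b F1 F2 : forall N hist s,
  EN pol N (fun h s => a * F1 h s + b * F2 h s) hist s = a * EN pol N F1 hist s + b * EN pol N F2 hist s.
Proof.
  induction N; intros hist s.
  - reflexivity.
  - destruct s.
    + rewrite !EN_S_Cont. unfold stepE, comb. rewrite !IHN. ring.
    + rewrite !EN_S_Ended. apply IHN.
    + rewrite !EN_S_Phi. ring.
Qed.

Definition Sst s := match s with Cont m n => Sset q m n | Ended m n => Sset q m n | Phi => True end.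

Lemma mix_le a X1 X2 Y1 Y2 : 0 <= a <= 1 -> X1 <= X2 -> Y1 <= Y2 -> a*X1 + (1-a)*Y1 <= a*X2 + (1-a)*Y2.
Proof. intros. nra. Qed.

Lemma EN_mono pol F1 F2 : valid_policy pol -> (forall h s, Sst s -> F1 h s <= F2 h s) ->
  forall N hist s, Sst s -> EN pol N F1 hist s <= EN pol N F2 hist s.
Proof.
  intros Hpol HF. induction N; intros hist s Hs.
  - simpl. auto.
  - destruct s.
    + rewrite !EN_S_Cont. apply mix_le. apply Hpol.
      * unfold stepE. apply comb_le.
        -- destruct (Req_dec q 0) as [q0|q0]; [left; auto|right; split];
           apply IHN; simpl; apply Sset_r; auto; apply Sset_00.
        -- destruct (Req_dec q 1) as [q1|q1]; [left; auto|right; split];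
           apply IHN; simpl; apply Sset_u; auto; apply Sset_00.
      * unfold stepE. apply comb_le.
        -- destruct (Req_dec q 0) as [q0|q0]; [left; auto|right; split];
           apply IHN; simpl; apply Sset_r; auto.
        -- destruct (Req_dec q 1) as [q1|q1]; [left; auto|right; split];
           apply IHN; simpl; apply Sset_u; auto.
    + rewrite !EN_S_Ended. apply IHN. simpl; auto.
    + rewrite !EN_S_Phi. lra.
Qed.

Definition F1C (h : history) (s : state) : R := match s with Cont _ _ => 1 | _ => 0 end.

Lemma EN_1C_nc pol : forall N hist s, (match s with Cont _ _ => False | _ => True end) -> EN pol N F1C hist s = 0.
Proof.
  induction N; intros hist s Hs.
  - destruct s; simpl; tauto.
  - destruct s; [contradiction| |].
    + rewrite EN_S_Ended. apply IHN. exact I.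
    + apply EN_S_Phi.
Qed.

Lemma EN_1C_le pol : valid_policy pol -> forall N hist s, EN pol N F1C hist s <= (1-p)^N.
Proof.
  intros Hpol. induction N; intros hist s.
  - destruct s; simpl; lra.
  - pose proof (pow_le (1-p) N ltac:(lra)).
    destruct s.
    + rewrite EN_S_Cont.
      assert (Hst : forall h i j, stepE pol N F1C h i j <= (1-p)^(S N)).
      { intros h i j. unfold stepE.
        apply Rle_trans with (comb ((1-p)^N) 0 ((1-p)^N) 0).
        apply comb_le; right; split; try apply IHN; rewrite EN_1C_nc; auto; lra.
        unfold comb. simpl. nra. }
      pose proof (Hpol hist (Cont m n)).
      apply Rle_trans with (pol hist (Cont m n) * (1-p)^(S N) + (1 - pol hist (Cont m n)) * (1-p)^(S N)).
      apply mix_le; auto. right; ring.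
    + rewrite EN_1C_nc by exact I. apply pow_le; lra.
    + rewrite EN_1C_nc by exact I. apply pow_le; lra.
Qed.

Lemma comb_nonneg A B C D : 0 <= A -> 0 <= B -> 0 <= C -> 0 <= D -> 0 <= comb A B C D.
Proof.
  intros. replace 0 with (comb 0 0 0 0) by (unfold comb; ring).
  apply comb_le; right; split; auto.
Qed.

Lemma V_nonneg pol : valid_policy pol -> forall N hist s, 0 <= Vfin d p q lam pol N hist s.
Proof.
  intros Hpol. induction N; intros hist s.
  - rewrite V_0; lra.
  - destruct s.
    + rewrite V_S_Cont. pose proof (Hpol hist (Cont m n)). pose proof (Hddpos m n).
      assert (forall h i j, 0 <= stepV pol N h i j) by (intros; apply comb_nonneg; apply IHN).
      pose proof (H1 ((Cont m n, true) :: hist) 0%nat 0%nat).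
      pose proof (H1 ((Cont m n, false) :: hist) m n). nra.
    + rewrite V_S_Ended. pose proof (IHN ((Ended m n, true) :: hist) Phi). pose proof (Hddpos m n). lra.
    + rewrite V_S_Phi; lra.
Qed.

Lemma V2_Cont pol : valid_policy pol -> forall hist m n, p * dd d m n <= Vfin d p q lam pol 2 hist (Cont m n).
Proof.
  intros Hpol hist m n. rewrite V_S_Cont.
  assert (Hs : forall h i j, p * dd d i j <= stepV pol 1 h i j).
  { intros h i j. unfold stepV. rewrite !V_S_Ended, !V_Phi.
    apply Rle_trans with (comb 0 (dd d i j) 0 (dd d i j)).
    unfold comb; right; ring.
    apply comb_le; right; split; try apply V_nonneg; auto.
    pose proof (Hddgen i j (S i) j ltac:(lia) ltac:(lia)); lra.
    pose proof (Hddgen i j i (S j) ltac:(lia) ltac:(lia)); lra. }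
  pose proof (Hs ((Cont m n, true) :: hist) 0%nat 0%nat).
  pose proof (Hs ((Cont m n, false) :: hist) m n).
  pose proof (Hpol hist (Cont m n)). pose proof (Hddpos m n). pose proof (Hddpos 0 0).
  set (a := pol hist (Cont m n)) in *.
  assert (a * (p * dd d m n) <= a * (lam + dd d m n + stepV pol 1 ((Cont m n, true) :: hist) 0 0)).
  { apply Rmult_le_compat_l. lra. nra. }
  assert ((1-a) * (p * dd d m n) <= (1-a) * stepV pol 1 ((Cont m n, false) :: hist) m n).
  { apply Rmult_le_compat_l; lra. }
  lra.
Qed.

Lemma V2_Ended pol hist m n : Vfin d p q lam pol 2 hist (Ended m n) = dd d m n.
Proof. rewrite V_S_Ended, V_Phi. ring. Qed.

Definition Vof (Z : nat -> nat -> R) (s : state) : R :=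
  match s with Cont m n => Z m n | Ended m n => dd d m n | Phi => 0 end.

Lemma verif pol Z : valid_policy pol ->
  (forall m n, Sset q m n -> Z m n <= lam + dd d m n + stp Z 0 0 /\ Z m n <= stp Z m n) ->
  forall N hist s, Sst s -> Vof Z s <= Vfin d p q lam pol N hist s + EN pol N (fun _ s => Vof Z s) hist s.
Proof.
  intros Hpol HZ. induction N; intros hist s Hs.
  - rewrite V_0. simpl. lra.
  - destruct s.
    + rewrite V_S_Cont, EN_S_Cont. simpl Vof at 1.
      assert (Hst : forall h i j, Sset q i j -> stp Z i j <= stepV pol N h i j + stepE pol N (fun _ s => Vof Z s) h i j).
      { intros h i j Hij. unfold stepV, stepE, stp.
        apply Rle_trans with (comb
          (Vfin d p q lam pol N h (Cont (S i) j) + EN pol N (fun _ s => Vof Z s) h (Cont (S i) j))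
          (Vfin d p q lam pol N h (Ended (S i) j) + EN pol N (fun _ s => Vof Z s) h (Ended (S i) j))
          (Vfin d p q lam pol N h (Cont i (S j)) + EN pol N (fun _ s => Vof Z s) h (Cont i (S j)))
          (Vfin d p q lam pol N h (Ended i (S j)) + EN pol N (fun _ s => Vof Z s) h (Ended i (S j)))).
        - apply comb_le.
          + destruct (Req_dec q 0) as [q0|q0]; [left; auto|right; split].
            * apply (IHN h (Cont (S i) j)). simpl; apply Sset_r; auto.
            * apply (IHN h (Ended (S i) j)). simpl; apply Sset_r; auto.
          + destruct (Req_dec q 1) as [q1|q1]; [left; auto|right; split].
            * apply (IHN h (Cont i (S j))). simpl; apply Sset_u; auto.
            * apply (IHN h (Ended i (S j))). simpl; apply Sset_u; auto.
        - unfold comb; right; ring. }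
      pose proof (Hst ((Cont m n, true) :: hist) 0%nat 0%nat Sset_00).
      pose proof (Hst ((Cont m n, false) :: hist) m n Hs).
      destruct (HZ m n Hs) as [HZ1 HZ2].
      pose proof (Hpol hist (Cont m n)).
      set (a := pol hist (Cont m n)) in *.
      assert (a * Z m n <= a * (lam + dd d m n + (stepV pol N ((Cont m n, true) :: hist) 0 0
                 + stepE pol N (fun _ s => Vof Z s) ((Cont m n, true) :: hist) 0 0)))
        by (apply Rmult_le_compat_l; lra).
      assert ((1-a) * Z m n <= (1-a) * (stepV pol N ((Cont m n, false) :: hist) m n
                 + stepE pol N (fun _ s => Vof Z s) ((Cont m n, false) :: hist) m n))
        by (apply Rmult_le_compat_l; lra).
      lra.
    + rewrite V_S_Ended, EN_S_Ended. simpl Vof at 1.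
      pose proof (IHN ((Ended m n, true) :: hist) Phi I). simpl in H. lra.
    + rewrite V_S_Phi, EN_S_Phi. simpl. lra.
Qed.


Definition Reach K s := match s with
  | Cont m n => Sset q m n /\ (m + n <= K)%nat
  | Ended m n => Sset q m n /\ (m + n <= K)%nat
  | Phi => True end.

Lemma thr_val h hist m n : thr_policy d p q lam h hist (Cont m n) =
  if Rle_dec (p*(lam+h)) (Deltaq d q m n) then 1 else 0.
Proof. reflexivity. Qed.

Lemma thr_valid h : valid_policy (thr_policy d p q lam h).
Proof. intros hist s. unfold thr_policy. destruct s; try destruct Rle_dec; lra. Qed.

Lemma nP_small h m n : Sset q m n -> ~ p*(lam+h) <= Deltaq d q m n -> (m + n < Kf h)%nat.
Proof.
  intros Hs HnP. destruct (Kf_spec h) as [_ HK].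
  destruct (Compare_dec.lt_dec (m+n) (Kf h)) as [l|l]; auto.
  exfalso. apply HnP. apply HK; auto. lia.
Qed.

Lemma thr_eq h G : G = Y h G -> forall N hist s, Reach (Kf h) s ->
  Vfin d p q lam (thr_policy d p q lam h) N hist s
  + EN (thr_policy d p q lam h) N (fun _ s => Vof (Xf h G) s) hist s = Vof (Xf h G) s.
Proof.
  intros HG. set (pol := thr_policy d p q lam h). set (F := fun (_ : history) s => Vof (Xf h G) s).
  destruct (Kf_spec h) as [HK1 HK2].
  induction N; intros hist s Hs.
  - rewrite V_0. simpl. unfold F. ring.
  - destruct s.
    + destruct Hs as [Hs Hmn].
      assert (Hst : forall hh i j, Sset q i j -> (i + j < Kf h)%nat ->
          stepV pol N hh i j + stepE pol N F hh i j = stp (Xf h G) i j).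
      { intros hh i j Hij Hk. unfold stepV, stepE, stp.
        transitivity (comb
          (Vfin d p q lam pol N hh (Cont (S i) j) + EN pol N F hh (Cont (S i) j))
          (Vfin d p q lam pol N hh (Ended (S i) j) + EN pol N F hh (Ended (S i) j))
          (Vfin d p q lam pol N hh (Cont i (S j)) + EN pol N F hh (Cont i (S j)))
          (Vfin d p q lam pol N hh (Ended i (S j)) + EN pol N F hh (Ended i (S j)))).
        - unfold comb; ring.
        - apply comb_eq.
          + destruct (Req_dec q 0) as [q0|q0]; [left; auto|right; split].
            * apply (IHN hh (Cont (S i) j)). simpl; split; [apply Sset_r; auto|lia].
            * apply (IHN hh (Ended (S i) j)). simpl; split; [apply Sset_r; auto|lia].
          + destruct (Req_dec q 1) as [q1|q1]; [left; auto|right; split].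
            * apply (IHN hh (Cont i (S j))). simpl; split; [apply Sset_u; auto|lia].
            * apply (IHN hh (Ended i (S j))). simpl; split; [apply Sset_u; auto|lia]. }
      rewrite V_S_Cont, EN_S_Cont. change (pol hist (Cont m n)) with (if Rle_dec (p*(lam+h)) (Deltaq d q m n) then 1 else 0). simpl Vof.
      destruct Rle_dec as [P|nP].
      * rewrite Xf_P by auto.
        pose proof (Hst ((Cont m n, true) :: hist) 0%nat 0%nat Sset_00 ltac:(lia)) as E.
        fold (Y h G) in E. lra.
      * rewrite Xf_nP by auto.
        pose proof (Hst ((Cont m n, false) :: hist) m n Hs (nP_small h m n Hs nP)) as E. lra.
    + rewrite V_S_Ended, EN_S_Ended.
      pose proof (IHN ((Ended m n, true) :: hist) Phi I) as E. simpl in E |- *. lra.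
    + rewrite V_S_Phi, EN_S_Phi. simpl. ring.
Qed.

Lemma EN_Phi0 pol F : (forall hh, F hh Phi = 0) -> forall N hist, EN pol N F hist Phi = 0.
Proof. intros H N hist. destruct N; [apply H|reflexivity]. Qed.

Lemma thr_range h F B : (forall hh s, Reach (Kf h) s -> 0 <= F hh s <= B) ->
  forall N hist s, Reach (Kf h) s -> 0 <= EN (thr_policy d p q lam h) N F hist s <= B.
Proof.
  intros HF. set (pol := thr_policy d p q lam h).
  assert (HB : 0 <= B) by (pose proof (HF nil Phi I); lra).
  induction N; intros hist s Hs.
  - simpl. auto.
  - assert (Hst : forall hh i j, Sset q i j -> (i + j < Kf h)%nat ->
          0 <= stepE pol N F hh i j <= B).
    { intros hh i j Hij Hk. unfold stepE. split.
      - replace 0 with (comb 0 0 0 0) by (unfold comb; ring).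
        apply comb_le.
        + destruct (Req_dec q 0) as [q0|q0]; [left; auto|right; split].
          * apply (IHN hh (Cont (S i) j)). simpl; split; [apply Sset_r; auto|lia].
          * apply (IHN hh (Ended (S i) j)). simpl; split; [apply Sset_r; auto|lia].
        + destruct (Req_dec q 1) as [q1|q1]; [left; auto|right; split].
          * apply (IHN hh (Cont i (S j))). simpl; split; [apply Sset_u; auto|lia].
          * apply (IHN hh (Ended i (S j))). simpl; split; [apply Sset_u; auto|lia].
      - apply Rle_trans with (comb B B B B); [|rewrite comb_const; lra].
        apply comb_le.
        + destruct (Req_dec q 0) as [q0|q0]; [left; auto|right; split].
          * apply (IHN hh (Cont (S i) j)). simpl; split; [apply Sset_r; auto|lia].
          * apply (IHN hh (Ended (S i) j)). simpl; split; [apply Sset_r; auto|lia].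
        + destruct (Req_dec q 1) as [q1|q1]; [left; auto|right; split].
          * apply (IHN hh (Cont i (S j))). simpl; split; [apply Sset_u; auto|lia].
          * apply (IHN hh (Ended i (S j))). simpl; split; [apply Sset_u; auto|lia]. }
    destruct (Kf_spec h) as [HK1 HK2].
    destruct s.
    + destruct Hs as [Hs Hmn]. rewrite EN_S_Cont. change (pol hist (Cont m n)) with (if Rle_dec (p*(lam+h)) (Deltaq d q m n) then 1 else 0).
      destruct Rle_dec as [P|nP].
      * pose proof (Hst ((Cont m n, true) :: hist) 0%nat 0%nat Sset_00 ltac:(lia)). lra.
      * pose proof (Hst ((Cont m n, false) :: hist) m n Hs (nP_small h m n Hs nP)). lra.
    + rewrite EN_S_Ended. apply IHN. exact I.
    + rewrite EN_S_Phi. lra.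
Qed.

Lemma thr_decay h F B : (forall hh s, Reach (Kf h) s -> 0 <= F hh s <= B) -> (forall hh, F hh Phi = 0) ->
  forall N hist s, Reach (Kf h) s -> EN (thr_policy d p q lam h) (S N) F hist s <= B * (1-p)^N.
Proof.
  intros HF HF0. set (pol := thr_policy d p q lam h).
  assert (HB : 0 <= B) by (pose proof (HF nil Phi I); lra).
  destruct (Kf_spec h) as [HK1 HK2].
  induction N; intros hist s Hs.
  - simpl. rewrite Rmult_1_r. apply (thr_range h F B HF 1 hist s Hs).
  - pose proof (pow_le (1-p) N ltac:(lra)).
    assert (HT : 0 <= B * (1-p)^N) by (apply Rmult_le_pos; lra).
    assert (Hst : forall hh i j, Sset q i j -> (i + j < Kf h)%nat ->
          stepE pol (S N) F hh i j <= B * (1-p)^(S N)).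
    { intros hh i j Hij Hk. unfold stepE.
      apply Rle_trans with (comb (B * (1-p)^N) 0 (B * (1-p)^N) 0).
      - apply comb_le.
        + destruct (Req_dec q 0) as [q0|q0]; [left; auto|right; split].
          * apply (IHN hh (Cont (S i) j)). simpl; split; [apply Sset_r; auto|lia].
          * rewrite EN_S_Ended, EN_Phi0; auto; lra.
        + destruct (Req_dec q 1) as [q1|q1]; [left; auto|right; split].
          * apply (IHN hh (Cont i (S j))). simpl; split; [apply Sset_u; auto|lia].
          * rewrite EN_S_Ended, EN_Phi0; auto; lra.
      - unfold comb. simpl. right; ring. }
    pose proof (pow_le (1-p) (S N) ltac:(lra)).
    assert (0 <= B * (1-p)^(S N)) by (apply Rmult_le_pos; lra).
    destruct s.
    + destruct Hs as [Hs Hmn]. rewrite EN_S_Cont. change (pol hist (Cont m n)) with (if Rle_dec (p*(lam+h)) (Deltaq d q m n) then 1 else 0).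
      destruct Rle_dec as [P|nP].
      * pose proof (Hst ((Cont m n, true) :: hist) 0%nat 0%nat Sset_00 ltac:(lia)). lra.
      * pose proof (Hst ((Cont m n, false) :: hist) m n Hs (nP_small h m n Hs nP)). lra.
    + rewrite EN_S_Ended, EN_Phi0; auto.
    + rewrite EN_S_Phi. auto.
Qed.

Lemma Xk_le_B h G : 0 <= G -> forall k m n, Sset q m n -> (m + n <= Kf h)%nat ->
  Xk h G k m n <= lam + G + dd d (Kf h) (Kf h).
Proof.
  intros HG. induction k; intros m n Hs Hmn.
  - simpl. pose proof (Hddgen m n (Kf h) (Kf h) ltac:(lia) ltac:(lia)). lra.
  - rewrite Xk_S. destruct Rle_dec as [P|nP].
    + pose proof (Hddgen m n (Kf h) (Kf h) ltac:(lia) ltac:(lia)). lra.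
    + pose proof (nP_small h m n Hs nP) as Hlt.
      set (T := lam + G + dd d (Kf h) (Kf h)).
      apply Rle_trans with (comb T (dd d (Kf h) (Kf h)) T (dd d (Kf h) (Kf h))).
      * unfold stp. apply comb_le.
        -- destruct (Req_dec q 0) as [q0|q0]; [left; auto|right; split].
           apply IHk; [apply Sset_r; auto|lia]. apply Hddgen; lia.
        -- destruct (Req_dec q 1) as [q1|q1]; [left; auto|right; split].
           apply IHk; [apply Sset_u; auto|lia]. apply Hddgen; lia.
      * unfold comb, T. pose proof (Hddpos (Kf h) (Kf h)). nra.
Qed.

Lemma thr_conv h G : G = Y h G -> 0 <= G ->
  total_cost_is d p q lam (thr_policy d p q lam h) 0 0 (Xf h G 0 0).
Proof.
  intros HG HG0.
  set (K := Kf h). set (B := lam + G + dd d K K).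
  set (F := fun (_ : history) s => Vof (Xf h G) s).
  assert (HBp : 0 < B) by (unfold B; pose proof (Hddpos K K); lra).
  assert (HF : forall hh s, Reach (Kf h) s -> 0 <= F hh s <= B).
  { intros hh s Hs. destruct s; simpl in Hs |- *.
    - destruct Hs. split. apply Xk_nonneg; auto. apply Xk_le_B; auto.
    - destruct Hs. pose proof (Hddpos m n). pose proof (Hddgen m n K K ltac:(unfold K; lia) ltac:(unfold K; lia)).
      unfold B. lra.
    - lra. }
  assert (HF0 : forall hh, F hh Phi = 0) by reflexivity.
  assert (HR : Reach (Kf h) (Cont 0 0)) by (split; [apply Sset_00|lia]).
  unfold total_cost_is, Un_cv. intros eps Heps.
  destruct (pow_lt_1_zero (1-p) ltac:(rewrite Rabs_right; lra) (eps / (B+1))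
     ltac:(apply Rdiv_lt_0_compat; lra)) as [N0 HN0].
  exists (S N0). intros n Hn. destruct n as [|n']; [lia|].
  pose proof (thr_eq h G HG (S n') nil (Cont 0 0) HR) as E. fold F in E. simpl Vof in E.
  pose proof (thr_decay h F B HF HF0 n' nil (Cont 0 0) HR).
  pose proof (thr_range h F B HF (S n') nil (Cont 0 0) HR).
  pose proof (HN0 n' ltac:(lia)) as Hp'.
  pose proof (Rle_abs ((1-p)^n')).
  assert (Ht : eps / (B+1) * (B+1) = eps) by (field; lra).
  assert (B * (1-p)^n' <= B * (eps / (B+1))) by (apply Rmult_le_compat_l; lra).
  unfold R_dist. rewrite Rabs_left1 by lra.
  assert (0 < eps / (B + 1)) by (apply Rdiv_lt_0_compat; lra).
  nra.
Qed.

Theorem main_sec : exists gstar, is_J d p q lam 0 0 gstar /\ g_is d p q lam gstar gstar /\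
  (forall h, 0 <= h -> h <> gstar -> ~ g_is d p q lam h h).
Proof.
  destruct fp_exists as [hs [Hhs0 Hhs]].
  assert (HnP : ~ p*(lam+hs) <= Deltaq d q 0 0).
  { intro P. pose proof (stp_P hs hs 0 0 Sset_00 P) as E. fold (Y hs hs) in E. fold (Sfun hs) in E.
    pose proof (Hddpos 0 0). nra. }
  assert (HX : Xf hs hs 0 0 = hs).
  { rewrite Xf_nP by (auto; apply Sset_00). fold (Y hs hs). exact Hhs. }
  assert (HG : hs = Y hs hs) by (symmetry; exact Hhs).
  exists hs. split; [|split].
  - split.
    + intros pol Hpol c Hc.
      set (Z := Xf hs hs).
      assert (HZ : forall m n, Sset q m n -> Z m n <= lam + dd d m n + stp Z 0 0 /\ Z m n <= stp Z m n).
      { intros m n Hs. unfold Z. fold (Y hs hs). rewrite <- HG.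
        split; [apply Xf_le_stop|apply Xf_le_stp]; auto. }
      assert (Hmain : forall N, hs <= Vfin d p q lam pol N nil (Cont 0 0) + (lam + hs) * (1-p)^N
          + / p * (Vfin d p q lam pol (N + 2) nil (Cont 0 0) - Vfin d p q lam pol N nil (Cont 0 0))).
      { intros N. pose proof (verif pol Z Hpol HZ N nil (Cont 0 0) Sset_00) as V1.
        simpl Vof at 1 in V1. unfold Z in V1 at 1. rewrite HX in V1.
        assert (V2 : EN pol N (fun _ s => Vof Z s) nil (Cont 0 0) <=
           EN pol N (fun h s => (lam + hs) * F1C h s + / p * Vfin d p q lam pol 2 h s) nil (Cont 0 0)).
        { apply EN_mono; auto. 2: exact Sset_00.
          intros hh s Hs. destruct s; cbn [Vof F1C].
          - pose proof (V2_Cont pol Hpol hh m n).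
            assert (dd d m n <= / p * Vfin d p q lam pol 2 hh (Cont m n)).
            { apply Rmult_le_reg_l with p. lra. rewrite <- Rmult_assoc, Rinv_r; lra. }
            pose proof (Xf_le_stop hs m n Hs). unfold Z. lra.
          - rewrite V2_Ended. pose proof (Hddpos m n).
            assert (dd d m n <= / p * dd d m n).
            { apply Rmult_le_reg_l with p. lra. rewrite <- Rmult_assoc, Rinv_r; nra. }
            lra.
          - rewrite V_Phi. lra. }
        rewrite EN_lin in V2.
        pose proof (EN_1C_le pol Hpol N nil (Cont 0 0)).
        pose proof (tower pol 2 N nil (Cont 0 0)) as T.
        assert (Hl : (lam + hs) * EN pol N F1C nil (Cont 0 0) <= (lam + hs) * (1-p)^N)
          by (apply Rmult_le_compat_l; lra).
        change (fun (h : history) (s : state) => Vfin d p q lam pol 2 h s) with (Vfin d p q lam pol 2) in T.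
        rewrite T.
        replace (Vfin d p q lam pol N nil (Cont 0 0) + EN pol N (Vfin d p q lam pol 2) nil (Cont 0 0) -
          Vfin d p q lam pol N nil (Cont 0 0)) with (EN pol N (Vfin d p q lam pol 2) nil (Cont 0 0)) by ring.
        lra. }
      destruct (Rle_lt_dec hs c) as [ok|bad]; auto. exfalso.
      set (eps := hs - c).
      assert (Heps : 0 < eps) by (unfold eps; lra).
      destruct (Hc (p * eps / 8) ltac:(apply Rdiv_lt_0_compat; nra)) as [N1 HN1].
      destruct (pow_lt_1_zero (1-p) ltac:(rewrite Rabs_right; lra) (eps / (4 * (lam + hs)))
         ltac:(apply Rdiv_lt_0_compat; lra)) as [N2 HN2].
      set (N := (N1 + N2)%nat).
      pose proof (Hmain N) as HM.
      pose proof (HN1 N ltac:(unfold N; lia)) as A1.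
      pose proof (HN1 (N + 2)%nat ltac:(unfold N; lia)) as A2.
      pose proof (HN2 N ltac:(unfold N; lia)) as A3.
      unfold R_dist in A1, A2.
      pose proof (Rle_abs ((1-p)^N)).
      set (v0 := Vfin d p q lam pol N nil (Cont 0 0)) in *.
      set (v2 := Vfin d p q lam pol (N + 2) nil (Cont 0 0)) in *.
      assert (B1 : v0 < c + p * eps / 8) by (apply Rabs_def2 in A1; lra).
      assert (B1' : c - p * eps / 8 < v0) by (apply Rabs_def2 in A1; lra).
      assert (B2 : v2 < c + p * eps / 8) by (apply Rabs_def2 in A2; lra).
      assert (B3 : (lam + hs) * (1-p)^N < eps / 4).
      { assert ((lam + hs) * (1-p)^N < (lam + hs) * (eps / (4 * (lam + hs))))
          by (apply Rmult_lt_compat_l; lra).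
        replace ((lam + hs) * (eps / (4 * (lam + hs)))) with (eps / 4) in H0 by (field; lra). lra. }
      assert (B4 : / p * (v2 - v0) <= / p * (p * eps / 4)).
      { apply Rmult_le_compat_l. left; apply Rinv_0_lt_compat; lra. lra. }
      replace (/ p * (p * eps / 4)) with (eps / 4) in B4 by (field; lra).
      assert (p * eps / 8 < eps / 4) by nra.
      unfold eps in *. lra.
    + intros eps Heps. exists (thr_policy d p q lam hs). split. apply thr_valid.
      exists hs. split; [|lra].
      pose proof (thr_conv hs hs HG Hhs0) as C. rewrite HX in C. exact C.
  - pose proof (thr_conv hs hs HG Hhs0) as C. rewrite HX in C. exact C.
  - intros h Hh0 Hne Hg.
    pose proof (bY_bnd h) as Hb. pose proof (Y0_nonneg h) as HY0.
    set (G := Y h 0 / (1 - bY h)).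
    assert (HG1 : G = Y h G).
    { rewrite (Y_aff h G). unfold G. field. lra. }
    assert (HG0 : 0 <= G).
    { unfold G, Rdiv. apply Rmult_le_pos; auto. left; apply Rinv_0_lt_compat; lra. }
    pose proof (thr_conv h G HG1 HG0) as C.
    assert (E : h = Xf h G 0 0) by (eapply UL_sequence; [exact Hg | exact C]).
    destruct (Rle_dec (p*(lam+h)) (Deltaq d q 0 0)) as [P|nP].
    + rewrite Xf_P in E by (auto; apply Sset_00).
      pose proof (stp_P h G 0 0 Sset_00 P) as E2. fold (Y h G) in E2.
      pose proof (Hddpos 0 0). nra.
    + rewrite Xf_nP in E by (auto; apply Sset_00). fold (Y h G) in E. rewrite <- HG1 in E.
      assert (Sfun h = h). { unfold Sfun. transitivity (Y h G). rewrite <- E; reflexivity. rewrite <- HG1. symmetry; exact E. }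
      apply Hne. apply fp_unique; auto.
Qed.

End MDP.

Theorem lemma4 (d : R -> R) (p q lam : R)
  (Hp : 0 < p < 1) (Hq : 0 <= q <= 1) (Hlam : 0 < lam)
  (HC1 : 0 < d 0)
  (HC2 : convex_on_nonneg d /\ increasing_on_nonneg d)
  (HC3 : C3 d) (HC4 : C4 d) :
  exists gstar,
    is_J d p q lam 0 0 gstar /\
    g_is d p q lam gstar gstar /\
    (forall h, 0 <= h -> h <> gstar -> ~ g_is d p q lam h h).
Proof.
  destruct HC2 as [Hconv Hinc].
  apply main_sec; auto.
  - intros m n. eapply dd_pos; eauto.
  - intros m n m' n' H1 H2. eapply dd_mono_gen; eauto.
  - intros m n. eapply Deltaq_mono; eauto.
  - intros T. eapply finite_Pc; eauto.
Qed.
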